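(* Let $n$ be an odd positive integer, $n_1=\lceil n/2\rceil$, $n_0=\lfloor n/2\rfloor$. Suppose $k\in K_0(\mathfrak{p})$ and $g\in\{1,\begin{pmatrix}0&1\\\varpi&0\end{pmatrix}\}$. Then $k g w a(\varpi^{n_1})=k'a(\varpi^{n_1})g'z$ for some $k'\in K$ with $l(k'a(\varpi^{n_1}))\le n_0$, some $g'\in\{1,\begin{pmatrix}0&1\\\varpi^n&0\end{pmatrix}\}$, and some $z\in Z$.
   Context: $F$ is a non-archimedean local field of characteristic $0$ with ring of integers $\mathfrak{o}$, maximal ideal $\mathfrak{p}$, uniformizer $\varpi$; $U_j=\{x\in\mathfrak{o}^\times: v(x-1)\ge j\}$. $G=\mathrm{GL}_2(F)$, $K=\mathrm{GL}_2(\mathfrak{o})$, $K_0(\mathfrak{p})=K\cap\begin{pmatrix}\mathfrak{o}&\mathfrak{o}\\\mathfrak{p}&\mathfrak{o}\end{pmatrix}$, $K_1(\mathfrak{p}^n)=K\cap\begin{pmatrix}1+\mathfrak{p}^n&\mathfrak{o}\\\mathfrak{p}^n&\mathfrak{o}\end{pmatrix}$, $w=\begin{pmatrix}0&1\\-1&0\end{pmatrix}$, $a(y)=\mathrm{diag}(y,1)$, $n(x)=\begin{pmatrix}1&x\\0&1\end{pmatrix}$, $Z$ the center, $N=\{n(x)\}$. There is a disjoint decomposition $G=\bigsqcup_{t\in\mathbb{Z}}\bigsqcup_{0\le l\le n}\bigsqcup_{v\in\mathfrak{o}^\times/U_{\min(l,n-l)}}ZN a(\varpi^t)wn(\varpi^{-l}v)K_1(\mathfrak{p}^n)$;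 for $h\in G$, $l(h)$ denotes the unique integer $0\le l\le n$ with $h\in ZNa(\varpi^{t})wn(\varpi^{-l}v)K_1(\mathfrak{p}^n)$ for some $t\in\mathbb Z$, $v\in\mathfrak{o}^\times$. *)

(* Defs.v *)
From HB Require Import structures.
From mathcomp Require Import all_boot all_order all_algebra.
Set Implicit Arguments. Unset Strict Implicit. Unset Printing Implicit Defensive.
Import Order.TTheory GRing.Theory Num.Theory.
Local Open Scope ring_scope.

(* A non-archimedean local field of characteristic 0, presented by a
   normalized discrete valuation [lf_val] (its value at 0 is irrelevant;
   "v(x) >= j" is encoded by [vge], which treats v(0) = +oo), a uniformizer,
   characteristic 0, finite residue field, and completeness. *)
Record local_field (F : fieldType) := LocalField {
  lf_val : F -> int;
  lf_unif : F;
  lf_val_mul : forall x y : F, x != 0 -> y != 0 ->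
      lf_val (x * y) = lf_val x + lf_val y;
  lf_val_add : forall x y : F, x != 0 -> y != 0 -> x + y != 0 ->
      Num.min (lf_val x) (lf_val y) <= lf_val (x + y);
  lf_unif_neq0 : lf_unif != 0;
  lf_val_unif : lf_val lf_unif = 1;
  lf_char0 : forall m : nat, (m.+1)%:R != 0 :> F;
  lf_residue_finite : exists s : seq F, forall x : F,
      (x = 0 \/ 0 <= lf_val x) ->
      exists2 y, y \in s & (x - y = 0 \/ 1 <= lf_val (x - y));
  lf_complete : forall u : nat -> F,
      (forall j : int, exists N : nat, forall p q : nat, (N <= p)%N -> (N <= q)%N ->
          u p - u q = 0 \/ j <= lf_val (u p - u q)) ->
      exists l : F, forall j : int, exists N : nat, forall p : nat, (N <= p)%N ->
          u p - l = 0 \/ j <= lf_val (u p - l)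
}.

Section LF.
Variables (F : fieldType) (L : local_field F).

Definition vge (x : F) (j : int) : Prop := x = 0 \/ j <= lf_val L x.
Definition is_unit_o (x : F) : Prop := x != 0 /\ lf_val L x = 0.

Definition i0 : 'I_2 := ord0.
Definition i1 : 'I_2 := ord_max.

Definition mx2 (a b c d : F) : 'M[F]_2 :=
  \matrix_(i < 2, j < 2)
    if (i == i0) then (if j == i0 then a else b) else (if j == i0 then c else d).

Definition wmx : 'M[F]_2 := mx2 0 1 (-1) 0.
Definition amx (y : F) : 'M[F]_2 := mx2 y 0 0 1.
Definition nmx (x : F) : 'M[F]_2 := mx2 1 x 0 1.

Definition in_K (k : 'M[F]_2) : Prop :=
  (forall i j, vge (k i j) 0) /\ is_unit_o (\det k).
Definition in_K0p (k : 'M[F]_2) : Prop := in_K k /\ vge (k i1 i0) 1.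
Definition in_K1 (n : nat) (k : 'M[F]_2) : Prop :=
  in_K k /\ vge (k i0 i0 - 1) n%:Z /\ vge (k i1 i0) n%:Z.
Definition in_Z (z : 'M[F]_2) : Prop := exists c : F, c != 0 /\ z = c%:M.

Definition has_level (n : nat) (h : 'M[F]_2) (l : nat) : Prop :=
  (l <= n)%N /\
  exists (z : 'M[F]_2) (x : F) (t : int) (v : F) (k1 : 'M[F]_2),
    [/\ in_Z z, is_unit_o v, in_K1 n k1 &
      h = z *m nmx x *m amx (lf_unif L ^ t) *m wmx
            *m nmx (lf_unif L ^- l * v) *m k1].

(* l(h) <= m, where l(h) is the (unique) level of h *)
Definition level_le (n : nat) (h : 'M[F]_2) (m : nat) : Prop :=
  exists l : nat, has_level n h l /\ (l <= m)%N.

End LF.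

(* Main.v *)
Require Import Defs.
From HB Require Import structures.
From mathcomp Require Import all_boot all_order all_algebra.
From mathcomp Require Import ring zify.
Import Order.TTheory GRing.Theory Num.Theory.
Local Open Scope ring_scope.

Section Aux.
Variables (F : fieldType) (L : local_field F).
Local Notation v := (lf_val L).
Local Notation P := (lf_unif L).

Lemma mx2E (a b c d : F) :
  [/\ mx2 a b c d i0 i0 = a, mx2 a b c d i0 i1 = b,
      mx2 a b c d i1 i0 = c & mx2 a b c d i1 i1 = d].
Proof. by rewrite !mxE. Qed.

Lemma mx2_eta (k : 'M[F]_2) : k = mx2 (k i0 i0) (k i0 i1) (k i1 i0) (k i1 i1).
Proof.
apply/matrixP => i j; rewrite !mxE.
case: i => [[|[|i]]] Hi //; case: j => [[|[|j]]] Hj //=;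
by congr (k _ _); apply: val_inj.
Qed.

Lemma mx2_mul (a b c d a' b' c' d' : F) :
  mx2 a b c d *m mx2 a' b' c' d' =
  mx2 (a*a'+b*c') (a*b'+b*d') (c*a'+d*c') (c*b'+d*d').
Proof.
apply/matrixP => i j; rewrite !mxE !big_ord_recr big_ord0 /= !mxE /= add0r.
by case: i => [[|[|i]]] Hi //; case: j => [[|[|j]]] Hj.
Qed.

Lemma mx2_scalar (c : F) : c%:M = mx2 c 0 0 c.
Proof.
apply/matrixP => i j; rewrite !mxE.
by case: i => [[|[|i]]] Hi //; case: j => [[|[|j]]] Hj.
Qed.

Lemma mx2_det (a b c d : F) : \det (mx2 a b c d) = a * d - b * c.
Proof.
rewrite (expand_det_row _ ord0) !big_ord_recr big_ord0 /= add0r.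
rewrite /cofactor !det_mx11 !mxE /=.
rewrite !expr0 !mul1r expr1. ring.
Qed.

Lemma val1 : v 1 = 0.
Proof. have := lf_val_mul L (oner_neq0 F) (oner_neq0 F). rewrite mulr1 => h.
by apply: (addrI (v 1)); rewrite addr0 -h. Qed.

Lemma valN1 : v (-1) = 0.
Proof.
have h : (-1 : F) != 0 by rewrite oppr_eq0 oner_neq0.
have := lf_val_mul L h h. rewrite mulrNN mulr1 val1 => e.
have : v (-1) *+ 2 == 0 by rewrite mulr2n -e.
by rewrite mulrn_eq0 /= => /eqP.
Qed.

Lemma valN x : x != 0 -> v (- x) = v x.
Proof.
move=> hx; have h : (-1 : F) != 0 by rewrite oppr_eq0 oner_neq0.
by rewrite -mulN1r (lf_val_mul L h hx) valN1 add0r.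
Qed.

Lemma valV x : x != 0 -> v (x^-1) = - v x.
Proof.
move=> hx; have hx' : x^-1 != 0 by rewrite invr_eq0.
have := lf_val_mul L hx hx'. rewrite divff // val1 => e.
by apply/eqP; rewrite -addr_eq0 addrC -e.
Qed.

Lemma valX j : v (P ^+ j) = j%:Z.
Proof.
elim: j => [|j IH]; first by rewrite expr0 val1.
rewrite exprS (lf_val_mul L (lf_unif_neq0 L)) ?expf_neq0 ?lf_unif_neq0 //.
by rewrite lf_val_unif IH -addn1 PoszD addrC.
Qed.

Lemma val_strict x y : x != 0 -> y != 0 -> v x < v y -> x + y != 0 /\ v (x + y) = v x.
Proof.
move=> hx hy hlt.
have hxy : x + y != 0.
  apply/negP => /eqP h; have : y = - x by apply/eqP; rewrite -addr_eq0 addrC h.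
  by move=> e; move: hlt; rewrite e valN // ltxx.
split => //.
have h1 := lf_val_add L hx hy hxy.
have hmy : - y != 0 by rewrite oppr_eq0.
have : x + y + - y != 0 by rewrite addrK.
move=> h3; have := lf_val_add L hxy hmy h3.
rewrite addrK valN // => h4.
have h2 : Num.min (v x) (v y) = v x by apply/min_idPl; apply: ltW.
rewrite h2 in h1.
apply/eqP; rewrite eq_le h1 andbT.
case: (leP (v (x + y)) (v y)) => h5.
- move: h4; rewrite ge_min => /orP[h6|h6]; first done.
  by move: (lt_le_trans hlt h6); rewrite ltxx.
- move: h4; rewrite ge_min => /orP[//|h6].
  by move: (lt_le_trans hlt h6); rewrite ltxx.
Qed.

Lemma mx2_all (Q : F -> Prop) (a b c d : F) :
  Q a -> Q b -> Q c -> Q d -> forall i j, Q (mx2 a b c d i j).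
Proof.
move=> ha hb hc hd i j; rewrite !mxE.
by case: i => [[|[|i]]] Hi //; case: j => [[|[|j]]] Hj.
Qed.

Lemma level_main (n m j : nat) (s a b c d D be e : F) :
  (1 <= j)%N -> (j <= m)%N -> (m <= n)%N -> n./2 = m.-1 ->
  s != 0 -> d != 0 -> v d = 0 -> D != 0 -> v D = 0 -> D = a * d - b * c ->
  vge L be 0 -> e = c - d * P ^+ m * be -> e != 0 -> v e = j ->
  level_le L n (mx2 (s * (- b * P ^+ m)) (s * a) (s * (- d * P ^+ m)) (s * c)) n./2.
Proof.
move=> hj1 hjm hmn hn2 hs hd vd hD vD eD hbe ee he ve.
have hP := lf_unif_neq0 L.
exists (m - j)%N; split; last by rewrite hn2; lia.
split; first lia.
set l := (m - j)%N.
have ml : m = (l + j)%N by rewrite /l subnK.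
have hPj : P ^+ j != 0 by rewrite expf_neq0.
have hPl : P ^+ l != 0 by rewrite expf_neq0.
exists (s * d * P ^+ m)%:M, (b / d), (- (m%:Z)), (- e * d / (D * P ^+ j)),
  (mx2 1 (- be) 0 (D / (d * d))).
have hu : D / (d * d) != 0 by rewrite mulf_neq0 ?invr_eq0 ?mulf_neq0.
split.
- exists (s * d * P ^+ m); split => //.
  by rewrite !mulf_neq0 // expf_neq0.
- have hne : - e != 0 by rewrite oppr_eq0.
  have hDP : D * P ^+ j != 0 by rewrite mulf_neq0.
  split; first by rewrite !mulf_neq0 // invr_eq0.
  rewrite (lf_val_mul L) ?mulf_neq0 ?invr_eq0 //.
  rewrite (lf_val_mul L) // valN // valV // (lf_val_mul L) // valX vd vD ve.
  by rewrite addr0 add0r subrr.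
- split; [split|split].
  + apply: (mx2_all (fun x => vge L x 0)).
    * by right; rewrite val1.
    * case: hbe => [->|hb]; first by left; rewrite oppr0.
      by case: (eqVneq be 0) => [->|hb0]; [left; rewrite oppr0|right; rewrite valN].
    * by left.
    * right; rewrite (lf_val_mul L) ?invr_eq0 ?mulf_neq0 // valV ?mulf_neq0 //.
      by rewrite (lf_val_mul L) // vd vD.
  + rewrite mx2_det mulr0 subr0 mul1r; split => //.
    rewrite (lf_val_mul L) ?invr_eq0 ?mulf_neq0 // valV ?mulf_neq0 //.
    by rewrite (lf_val_mul L) // vd vD.
  + by left; rewrite mxE /= subrr.
  + by left; rewrite mxE.
- rewrite -exprnN /wmx /nmx /amx mx2_scalar !mx2_mul.
  rewrite ee eD ml !exprD.
  have hadbc : a * d - b * c != 0 by rewrite -eD.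
  congr mx2; field; rewrite ?hd ?hPj ?hPl ?hadbc //.
Qed.

Lemma vge0_nz x : vge L x 0 -> x != 0 -> 0 <= v x.
Proof. by case=> [->|//]; rewrite eqxx. Qed.

Lemma d_unit a b c d : vge L a 0 -> vge L b 0 -> vge L c 1 -> vge L d 0 ->
  is_unit_o L (a * d - b * c) -> d != 0 /\ v d = 0.
Proof.
move=> ha hb hc hd [hD vD].
have [had vad] : a * d != 0 /\ v (a * d) <= 0.
  case: (eqVneq (b * c) 0) => hbc.
    move: hD vD; rewrite hbc subr0 => hD vD; split => //; by rewrite vD.
  have vbc : 1 <= v (b * c).
    have hb0 : b != 0 by apply: contraNneq hbc => ->; rewrite mul0r.
    have hc0 : c != 0 by apply: contraNneq hbc => ->; rewrite mulr0.
    rewrite (lf_val_mul L) //.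
    have := vge0_nz _ hb hb0. case: hc => [e|hc1]; first by rewrite e eqxx in hc0.
    move=> hb1. move: hb1 hc1; move: (v b) (v c) => x y. lia.
  have hnbc : - (b * c) != 0 by rewrite oppr_eq0.
  case: (eqVneq (a * d) 0) => had.
    by move: vD; rewrite had sub0r valN // => e; move: vbc; rewrite e.
  split => //.
  rewrite leNgt; apply/negP => vad.
  have := lf_val_add L had hnbc hD. rewrite valN // vD ge_min => /orP[h1|h1].
    by move: (lt_le_trans vad h1); rewrite ltxx.
  by move: (le_trans vbc h1).
have ha0 : a != 0 by apply: contraNneq had => ->; rewrite mul0r.
have hd0 : d != 0 by apply: contraNneq had => ->; rewrite mulr0.
split => //.
move: vad; rewrite (lf_val_mul L) //.
have := vge0_nz _ ha ha0; have := vge0_nz _ hd hd0.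
move: (v a) (v d) => x y. lia.
Qed.

Lemma beta_exists (m : nat) (c d : F) : (1 <= m)%N -> vge L c 1 -> d != 0 -> v d = 0 ->
  exists be (j : nat), [/\ vge L be 0, (1 <= j <= m)%N,
     c - d * P ^+ m * be != 0 & v (c - d * P ^+ m * be) = j].
Proof.
move=> hm hc hd vd.
have hP := lf_unif_neq0 L.
have hPm : P ^+ m != 0 by rewrite expf_neq0.
have vbe : vge L (- d^-1) 0.
  by right; rewrite valN ?invr_eq0 // valV // vd.
have ebe : c - d * P ^+ m * (- d^-1) = P ^+ m + c by field.
case: (eqVneq c 0) => hc0.
  exists (- d^-1), m; rewrite ebe hc0 addr0 valX; split => //.
  by apply/andP; split.
case: hc => [e|vc]; first by rewrite e eqxx in hc0.
case E: (v c) => [j|j]; last by rewrite E in vc.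
case: (leqP j m) => hjm.
  exists 0, j; rewrite mulr0 subr0 E; split => //; first by left.
  by rewrite hjm andbT -(lez_nat 1 j) -E.
exists (- d^-1), m; rewrite ebe.
have hlt : v (P ^+ m) < v c by rewrite E valX ltz_nat.
have [h1 h2] := val_strict _ _ hPm hc0 hlt.
split => //; first by apply/andP; split.
by rewrite h2 valX.
Qed.

Lemma vgeN x j : vge L x j -> vge L (- x) j.
Proof.
case=> [->|h]; first by left; rewrite oppr0.
case: (eqVneq x 0) => [->|hx]; first by left; rewrite oppr0.
by right; rewrite valN.
Qed.

End Aux.
Arguments mx2_eta {F} k.
Arguments d_unit {F L a b c d}.
Arguments beta_exists {F} L {m c d}.
Arguments mx2_all {F} Q {a b c d}.
Arguments vgeN {F L x j}.
Arguments level_main {F L n m j s a b c d D be e}.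

Theorem lemma2p2 (F : fieldType) (L : local_field F) (n : nat) :
  odd n ->
  forall (k g : 'M[F]_2),
    in_K0p L k ->
    (g = 1%:M \/ g = mx2 0 1 (lf_unif L) 0) ->
    exists (k' g' z : 'M[F]_2),
      [/\ in_K L k',
          level_le L n (k' *m amx (lf_unif L ^+ uphalf n)) n./2,
          g' = 1%:M \/ g' = mx2 0 1 (lf_unif L ^+ n) 0,
          in_Z z &
          k *m g *m wmx F *m amx (lf_unif L ^+ uphalf n)
            = k' *m amx (lf_unif L ^+ uphalf n) *m g' *m z].
Proof.
move=> hodd k g [[hent hdet] hc] hg.
have Ek := mx2_eta k.
set a := k i0 i0 in Ek; set b := k i0 i1 in Ek; set c := k i1 i0 in Ek;
  set d := k i1 i1 in Ek.
have ha := hent i0 i0; have hb := hent i0 i1; have hd0 := hent i1 i1;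
  have hc0 := hent i1 i0.
have hdet' : is_unit_o L (a * d - b * c) by rewrite -mx2_det -Ek.
have [hd vd] := d_unit ha hb hc hd0 hdet'.
have [hD vD] := hdet'.
set q := n./2.
have hm : uphalf n = q.+1 by rewrite uphalf_half hodd.
have hn : n = (q + q.+1)%N.
  by rewrite -{1}(odd_double_half n) hodd -addnn /q; lia.
rewrite hm.
set m := q.+1.
have [be [j [hbe hj he ve]]] := beta_exists L (m := m) (isT : (1 <= m)%N) hc hd vd.
have hj1 : (1 <= j)%N by case/andP: hj.
have hjm : (j <= m)%N by case/andP: hj.
have hmn : (m <= n)%N by rewrite hn /m; lia.
have hP := lf_unif_neq0 L.
have hPq : lf_unif L ^+ q != 0 by rewrite expf_neq0.
case: hg => ->.
- exists (mx2 (- b) a (- d) c), 1%:M, 1%:M; split.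
  + split.
      apply: (mx2_all (fun x => vge L x 0)) => //; exact: vgeN.
    by rewrite mx2_det (_ : - b * c - a * - d = a * d - b * c) //; ring.
  + have -> : mx2 (- b) a (- d) c *m amx (lf_unif L ^+ m) =
      mx2 (1 * (- b * lf_unif L ^+ m)) (1 * a) (1 * (- d * lf_unif L ^+ m)) (1 * c).
      by rewrite /amx mx2_mul; congr mx2; ring.
    apply: (level_main (D := a * d - b * c) (j := j) (be := be)) => //.
    exact: oner_neq0.
  + by left.
  + by exists 1; split => //; exact: oner_neq0.
  + rewrite Ek /wmx /amx !mx2_scalar !mx2_mul; congr mx2; ring.
- exists (mx2 b (- a) d (- c)), (mx2 0 1 (lf_unif L ^+ n) 0),
    ((lf_unif L ^+ q)^-1)%:M; split.
  + split.
      apply: (mx2_all (fun x => vge L x 0)) => //; exact: vgeN.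
    by rewrite mx2_det (_ : b * - c - - a * d = a * d - b * c) //; ring.
  + have -> : mx2 b (- a) d (- c) *m amx (lf_unif L ^+ m) =
      mx2 (-1 * (- b * lf_unif L ^+ m)) (-1 * a) (-1 * (- d * lf_unif L ^+ m)) (-1 * c).
      by rewrite /amx mx2_mul; congr mx2; ring.
    apply: (level_main (D := a * d - b * c) (j := j) (be := be)) => //.
    by rewrite oppr_eq0 oner_neq0.
  + by right.
  + by exists (lf_unif L ^+ q)^-1; split => //; rewrite invr_eq0.
  + rewrite Ek /wmx /amx !mx2_scalar !mx2_mul hn /m !exprS !exprD !exprS.
    congr mx2; field; rewrite ?hP ?hPq //.
Qed.
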